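(* Let $\Phi,\Psi,S,T$ be finite sets and let $p(\varphi)$ on $\Phi$ and $p(\psi)$ on $\Psi$ be fixed probability distributions with full support. Let $\pi:S\times T\times\Phi\to\mathbb{R}$ be a payoff function that depends only on the signals and on the first player's state of nature. Suppose $p(s,t,\varphi,\psi)$ is a state-consistent entangled joint distribution on $S\times T\times\Phi\times\Psi$ that maximizes the expected payoff $\sum_{s,t,\varphi,\psi}\pi(s,t;\varphi)\,p(s,t,\varphi,\psi)$ among all state-consistent entangled joint distributions. Then there exists a state-consistent classically generated joint distribution $\widetilde p(s,t,\varphi,\psi)$ whose expected payoff $\sum_{s,t,\varphi,\psi}\pi(s,t;\varphi)\,\widetilde p(s,t,\varphi,\psi)$ equals this maximal value. That is, the maximal expected payoff achievable with state-consistent entangled signals coincides with the expected payoff of certain state-consistent classically generated signals.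
   Context: Coordination game: player A privately observes a state of nature $\varphi\in\Phi$, player B privately observes $\psi\in\Psi$; $\varphi$ and $\psi$ are independent with joint distribution $p(\varphi,\psi)=p(\varphi)p(\psi)$. Players receive signals $s\in S$ (A) and $t\in T$ (B) and play their signals as actions; the payoff is $\pi(s,t;\varphi)$ and the expected payoff of a joint distribution $q(s,t,\varphi,\psi)$ is $\sum\pi(s,t;\varphi)q(s,t,\varphi,\psi)$. A joint distribution of $(s,t,\varphi,\psi)$ is: state-consistent if its $(\varphi,\psi)$-marginal equals $p(\varphi)p(\psi)$; disjoint if $\Pr\{\psi\mid\varphi,s\}=\Pr\{\psi\mid\varphi\}$ and $\Pr\{\varphi\mid\psi,t\}=\Pr\{\varphi\mid\psi\}$ (whenever the conditioning events have positive probability); classically generated if there exists a random variable $x$ (jointly distributed with $(s,t,\varphi,\psi)$) independent of $(\varphi,\psi)$ such that $p(s,t\mid x,\varphi,\psi)=p(s\mid x,\varphi)\,p(t\mid x,\psi)$; entangled if it is disjoint and not classically generated. *)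

(* Defs.v *)
From HB Require Import structures.
From mathcomp Require Import all_boot all_order all_algebra.
From mathcomp Require Import reals.
Set Implicit Arguments. Unset Strict Implicit. Unset Printing Implicit Defensive.
Import Order.TTheory GRing.Theory Num.Theory.
Local Open Scope ring_scope.

Section Coord.
Variables (R : realType) (S T Phi Psi : finType).

Definition joint_dist (p : S -> T -> Phi -> Psi -> R) : Prop :=
  (forall s t f g, 0 <= p s t f g) /\
  \sum_(s : S) \sum_(t : T) \sum_(f : Phi) \sum_(g : Psi) p s t f g = 1.

Definition m_phipsi (p : S -> T -> Phi -> Psi -> R) f g :=
  \sum_(s : S) \sum_(t : T) p s t f g.
Definition m_phi (p : S -> T -> Phi -> Psi -> R) f :=
  \sum_(g : Psi) m_phipsi p f g.
Definition m_psi (p : S -> T -> Phi -> Psi -> R) g :=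
  \sum_(f : Phi) m_phipsi p f g.
Definition m_phis (p : S -> T -> Phi -> Psi -> R) f s :=
  \sum_(t : T) \sum_(g : Psi) p s t f g.
Definition m_phispsi (p : S -> T -> Phi -> Psi -> R) f s g :=
  \sum_(t : T) p s t f g.
Definition m_psit (p : S -> T -> Phi -> Psi -> R) g t :=
  \sum_(s : S) \sum_(f : Phi) p s t f g.
Definition m_psitphi (p : S -> T -> Phi -> Psi -> R) g t f :=
  \sum_(s : S) p s t f g.

Definition state_consistent (pA : Phi -> R) (pB : Psi -> R)
    (p : S -> T -> Phi -> Psi -> R) : Prop :=
  forall f g, m_phipsi p f g = pA f * pB g.

(* Pr{psi | phi, s} = Pr{psi | phi} and Pr{phi | psi, t} = Pr{phi | psi},
   whenever the conditioning event has positive probability. *)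
Definition disjoint (p : S -> T -> Phi -> Psi -> R) : Prop :=
  (forall f s g, 0 < m_phis p f s ->
     m_phispsi p f s g / m_phis p f s = m_phipsi p f g / m_phi p f) /\
  (forall g t f, 0 < m_psit p g t ->
     m_psitphi p g t f / m_psit p g t = m_phipsi p f g / m_psi p g).

(* Classically generated: there is a (finitely valued) random variable x,
   jointly distributed with (s,t,phi,psi) via q(x,s,t,phi,psi), whose
   marginal on (s,t,phi,psi) is p, x is independent of (phi,psi), and
   p(s,t | x,phi,psi) = p(s | x,phi) p(t | x,psi) (whenever x,phi,psi has
   positive probability). *)
Definition classically_generated (p : S -> T -> Phi -> Psi -> R) : Prop :=
  exists (X : finType) (q : X -> S -> T -> Phi -> Psi -> R),
    [/\ (forall x s t f g, 0 <= q x s t f g),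
        (forall s t f g, \sum_(x : X) q x s t f g = p s t f g),
        (forall x f g,
           \sum_(s : S) \sum_(t : T) q x s t f g =
           (\sum_(s : S) \sum_(t : T) \sum_(f' : Phi) \sum_(g' : Psi) q x s t f' g')
           * m_phipsi p f g) &
        (forall x s t f g,
           let qxfg := \sum_(s' : S) \sum_(t' : T) q x s' t' f g in
           let qxf := \sum_(s' : S) \sum_(t' : T) \sum_(g' : Psi) q x s' t' f g' in
           let qxg := \sum_(s' : S) \sum_(t' : T) \sum_(f' : Phi) q x s' t' f' g in
           let qxsf := \sum_(t' : T) \sum_(g' : Psi) q x s t' f g' in
           let qxtg := \sum_(s' : S) \sum_(f' : Phi) q x s' t f' g in
           0 < qxfg ->
           q x s t f g / qxfg = (qxsf / qxf) * (qxtg / qxg))].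

Definition entangled (p : S -> T -> Phi -> Psi -> R) : Prop :=
  disjoint p /\ ~ classically_generated p.

Definition expected_payoff (pi : S -> T -> Phi -> R)
    (p : S -> T -> Phi -> Psi -> R) : R :=
  \sum_(s : S) \sum_(t : T) \sum_(f : Phi) \sum_(g : Psi) pi s t f * p s t f g.

End Coord.

(* Main.v *)
Require Import Defs.
From HB Require Import structures.
From mathcomp Require Import all_boot all_order all_algebra.
From mathcomp Require Import reals.
Import Order.TTheory GRing.Theory Num.Theory.
Local Open Scope ring_scope.

Lemma sum_ind (R : realType) (T : finType) (x : T) (F : T -> R) :
  \sum_(t : T) (t == x)%:R * F t = F x.
Proof.
rewrite (bigD1 x) //= eqxx mul1r big1 ?addr0 // => t /negbTE ->.
by rewrite mul0r.
Qed.

Lemma sum_ind2 (R : realType) (T A B : finType) (x : T) (H : T -> A -> B -> R) :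
  \sum_(t : T) \sum_(a : A) \sum_(b : B) (t == x)%:R * H t a b =
  \sum_(a : A) \sum_(b : B) H x a b.
Proof.
under eq_bigr => t _ do under eq_bigr => a _ do rewrite -mulr_sumr.
under eq_bigr => t _ do rewrite -mulr_sumr.
exact: sum_ind.
Qed.

Theorem theorem2 (R : realType) (S T Phi Psi : finType)
    (pA : Phi -> R) (pB : Psi -> R)
    (pA_pos : forall f, 0 < pA f) (pA_sum : \sum_(f : Phi) pA f = 1)
    (pB_pos : forall g, 0 < pB g) (pB_sum : \sum_(g : Psi) pB g = 1)
    (pi : S -> T -> Phi -> R)
    (p : S -> T -> Phi -> Psi -> R) :
  joint_dist p -> state_consistent pA pB p -> entangled p ->
  (forall q : S -> T -> Phi -> Psi -> R,
      joint_dist q -> state_consistent pA pB q -> entangled q ->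
      expected_payoff pi q <= expected_payoff pi p) ->
  exists pt : S -> T -> Phi -> Psi -> R,
    [/\ joint_dist pt, state_consistent pA pB pt, classically_generated pt
      & expected_payoff pi pt = expected_payoff pi p].
Proof.
move=> [p0 p1] hsc [[_ disj] _] _.
pose P3 s t f := \sum_(g : Psi) p s t f g.
have hP3 : forall s t f, 0 <= P3 s t f by move=> s t f; apply: sumr_ge0.
have hm_psi : forall g, m_psi p g = pB g.
  move=> g; rewrite /m_psi; under eq_bigr do rewrite hsc.
  by rewrite -mulr_suml pA_sum mul1r.
have key : forall g t f, m_psitphi p g t f = pA f * m_psit p g t.
  move=> g t f.
  have e : m_psit p g t = \sum_(f' : Phi) m_psitphi p g t f'.
    by rewrite /m_psit /m_psitphi exchange_big.
  have : 0 <= m_psit p g t by rewrite e; apply: sumr_ge0 => f' _; apply: sumr_ge0.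
  rewrite le0r => /orP [/eqP hz|hpos].
    rewrite hz mulr0; move: hz; rewrite e => hz.
    by apply: (psumr_eq0P _ hz) => // f' _; apply: sumr_ge0.
  have := disj g t f hpos; rewrite hsc hm_psi mulfK ?lt0r_neq0 // => h.
  by rewrite -h divfK ?lt0r_neq0.
have indep : forall t f, \sum_(s : S) P3 s t f = pA f * \sum_(s : S) \sum_(f' : Phi) P3 s t f'.
  move=> t f; rewrite /P3 exchange_big /=.
  under eq_bigr do rewrite -/(m_psitphi p _ t f) key.
  rewrite -mulr_sumr; congr (_ * _).
  under [RHS]eq_bigr do rewrite exchange_big.
  by rewrite exchange_big.
pose pt s t f g := P3 s t f * pB g.
have hA : forall f, \sum_(s : S) \sum_(t : T) P3 s t f = pA f.
  move=> f; rewrite /P3; under eq_bigr do rewrite exchange_big.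
  rewrite exchange_big /=; under eq_bigr do rewrite -/(m_phipsi p f _) hsc.
  by rewrite -mulr_sumr pB_sum mulr1.
have hsct : state_consistent pA pB pt.
  move=> f g; rewrite /m_phipsi /pt; under eq_bigr do rewrite -mulr_suml.
  by rewrite -mulr_suml hA.
have hpt3 : forall s t f, \sum_(g : Psi) pt s t f g = P3 s t f.
  by move=> s t f; rewrite /pt -mulr_sumr pB_sum mulr1.
have hpt0 : forall s t f g, 0 <= pt s t f g.
  by move=> s t f g; apply: mulr_ge0 => //; apply: ltW.
exists pt; split => //.
- split => //; rewrite -p1; apply: eq_bigr => s _; apply: eq_bigr => t _.
  by apply: eq_bigr => f _; rewrite hpt3.
- exists T, (fun x s t f g => (t == x)%:R * pt s t f g); split.
  + by move=> x s t f g; apply: mulr_ge0 => //; apply: ler0n.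
  + move=> s t f g; under eq_bigr do rewrite eq_sym.
    by rewrite (sum_ind _ _ t (fun _ => pt s t f g)).
  + move=> x f g /=; under eq_bigr do rewrite sum_ind.
    under [X in _ = X * _]eq_bigr do rewrite sum_ind2.
    rewrite hsct; under [X in _ = X * _]eq_bigr do under eq_bigr do rewrite hpt3.
    rewrite /pt -mulr_suml indep.
    by rewrite [RHS]mulrCA mulrA.
  + move=> x s t f g qxfg qxf qxg qxsf qxtg hpos.
    pose Q := \sum_(s' : S) P3 s' x f.
    have e1 : qxfg = Q * pB g.
      by rewrite /qxfg; under eq_bigr do rewrite sum_ind; rewrite /pt -mulr_suml.
    have e2 : qxf = Q.
      rewrite /qxf; under eq_bigr do under eq_bigr do rewrite -mulr_sumr.
      by under eq_bigr do rewrite sum_ind hpt3.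
    have e3 : qxg = \sum_(s' : S) \sum_(f' : Phi) pt s' x f' g.
      rewrite /qxg; under eq_bigr do under eq_bigr do rewrite -mulr_sumr.
      by under eq_bigr do rewrite sum_ind.
    have e4 : qxsf = P3 s x f.
      by rewrite /qxsf; under eq_bigr do rewrite -mulr_sumr; rewrite sum_ind hpt3.
    have hq : 0 < \sum_(s' : S) \sum_(f' : Phi) pt s' x f' g.
      apply: (lt_le_trans hpos); rewrite e1 /Q mulr_suml.
      apply: ler_sum => s' _; rewrite (bigD1 f) //= lerDl.
      by apply: sumr_ge0.
    have hQ : Q != 0.
      by apply/eqP => hQ; move: hpos; rewrite e1 hQ mul0r ltxx.
    rewrite e1 e2 e3 e4 /qxtg.
    case: eqP => [->|_]; last first.
      rewrite !mul0r; under eq_bigr do under eq_bigr do rewrite mul0r.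
      by under eq_bigr do rewrite big1_eq; rewrite big1_eq mul0r mulr0.
    rewrite mul1r; under eq_bigr do under eq_bigr do rewrite mul1r.
    rewrite divff ?lt0r_neq0 // mulr1 /pt invfM mulrACA divff ?mulr1 //.
    exact: lt0r_neq0.
- apply: eq_bigr => s _; apply: eq_bigr => t _; apply: eq_bigr => f _.
  rewrite /pt; under eq_bigr do rewrite mulrA.
  by rewrite -[LHS]mulr_sumr pB_sum mulr1 /P3 mulr_sumr.
Qed.
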